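(* In the setting below with $P=\mathfrak S$, the worst case setting and the absolute error criterion, assume $\lambda_1\le1$. Then $\{S_d\}$ is strongly polynomially tractable if and only if $\lambda\in\ell_\tau$ for some $\tau>0$ and either $\lambda_1<1$, or $1=\lambda_1>\lambda_2$ and $d-\#I_d\in O(1)$. Moreover, $\{S_d\}$ is polynomially tractable if and only if $\lambda\in\ell_\tau$ for some $\tau>0$ and either $\lambda_1<1$, or $\lambda_1=1$ and $d-\#I_d\in O(\ln d)$.
   Context: Setting: $S_1:H_1\to G_1$ is a compact linear operator between real Hilbert spaces ($H_1$ infinite-dimensional separable); $\lambda=(\lambda_m)_{m\in\mathbb N}$, $\lambda_1\ge\lambda_2\ge\dots\ge0$, are the eigenvalues of $S_1^\dagger S_1$. $S_d=S_1^{\otimes d}:H_1^{\otimes d}\to G_1^{\otimes d}$. For each $d$ fix $\emptyset\ne I_d=\{i_1<\dots<i_{a_d}\}\subset\{1,\dots,d\}$ ($I_1=\{1\}$), put $a_d=\#I_d$, $b_d=d-a_d$, and fix one type $P\in\{\mathfrak S,\mathfrak A\}$ for all $d$; the problem $\{S_d\}$ is the family of restrictions of $S_d$ to the $I_d$-symmetric subspace (if $P=\mathfrak S$) or $I_d$-antisymmetric subspace (if $P=\mathfrak A$) of $H_1^{\otimes d}$, i.e. the range of $\frac1{a_d!}\sum_{\pi}(\pm1)U_\pi$, the sum over permutations $\pi$ of $\{1,\dots,d\}$ fixing all points outside $I_d$, $U_\pi(f_1\otimes\cdots\otimes f_d)=f_{\pi(1)}\otimes\cdots\otimes f_{\pi(d)}$,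 sign $(-1)^{|\pi|}$ used for $\mathfrak A$. Let $\nabla_d=\{k\in\mathbb N^d:k_{i_1}\le\dots\le k_{i_{a_d}}\}$ for $P=\mathfrak S$ and with strict inequalities for $P=\mathfrak A$; $\lambda_{d,k}=\prod_{l=1}^d\lambda_{k_l}$; $\psi:\mathbb N\to\nabla_d$ a bijection with $\lambda_{d,\psi(1)}\ge\lambda_{d,\psi(2)}\ge\cdots$. These are exactly the eigenvalues of $S_d^\dagger S_d$ on the subspace, and the information complexity (absolute error) is $n(\epsilon,d)=\#\{k\in\nabla_d:\lambda_{d,k}>\epsilon^2\}$, the initial error $\epsilon^{\rm init}_d=\sqrt{\lambda_{d,\psi(1)}}$ (equal to $\lambda_1^{d/2}$ if $P=\mathfrak S$, and $\sqrt{\lambda_1^{b_d}\lambda_1\lambda_2\cdots\lambda_{a_d}}$ if $P=\mathfrak A$). Polynomially tractable: $\exists C,p>0,q\ge0$ with $n(\epsilon,d)\le C\epsilon^{-p}d^q$ for all $d\in\mathbb N,\epsilon\in(0,1]$; strongly polynomially tractable: this with $q=0$. Standing assumptions: $\lambda_2>0$ and $\epsilon_d^{\rm init}>0$ for all $d$. $\ell_\tau$: sequences with $\|\lambda\|_{\ell_\tau}^\tau=\sum_m\lambda_m^\tau<\infty$. *)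

(* Defs.v *)
From Stdlib Require Import Reals Lra Lia List.
Import ListNotations.
Open Scope R_scope.

(* Real power x^t for x >= 0, t > 0 (with 0^t = 0). *)
Definition rpow (x t : R) : R := if Req_dec_T x 0 then 0 else Rpower x t.

(* lambda is indexed from 1: lambda_m = lam m for m >= 1 (lam 0 is unused). *)
Definition admissible_eigs (lam : nat -> R) : Prop :=
  (forall m, (1 <= m)%nat -> 0 <= lam m) /\
  (forall m, (1 <= m)%nat -> lam (S m) <= lam m) /\
  Un_cv lam 0.  (* S_1 compact: eigenvalues tend to 0 *)

(* I d i = true  iff  i \in I_d ; I_d is a nonempty subset of {1..d}, I_1 = {1}. *)
Definition admissible_I (I : nat -> nat -> bool) : Prop :=
  (forall d i, I d i = true -> (1 <= i <= d)%nat) /\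
  (forall d, (1 <= d)%nat -> exists i, I d i = true) /\
  I 1%nat 1%nat = true.

Definition card_I (I : nat -> nat -> bool) (d : nat) : nat :=
  length (filter (fun i => I d i) (seq 1 d)).

Definition b_of (I : nat -> nat -> bool) (d : nat) : nat := (d - card_I I d)%nat.

(* A multi-index k = (k_1,...,k_d) in N^d (N = {1,2,...}) is a list of length d;
   k_l = nth (l-1) k 0. *)
Definition kth (k : list nat) (l : nat) : nat := nth (l - 1) k 0%nat.

Definition in_nabla_sym (I : nat -> nat -> bool) (d : nat) (k : list nat) : Prop :=
  length k = d /\ (forall x, In x k -> (1 <= x)%nat) /\
  (forall i j, I d i = true -> I d j = true -> (i < j)%nat -> (kth k i <= kth k j)%nat).

Definition lam_dk (lam : nat -> R) (k : list nat) : R := fold_right Rmult 1 (map lam k).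

(* #A <= N, for a possibly infinite set A *)
Definition card_le {T : Type} (A : T -> Prop) (N : R) : Prop :=
  forall l : list T, NoDup l -> (forall x, In x l -> A x) -> INR (length l) <= N.

Definition info_compl_le (lam : nat -> R) (I : nat -> nat -> bool) (eps : R) (d : nat) (N : R) : Prop :=
  card_le (fun k => in_nabla_sym I d k /\ lam_dk lam k > eps ^ 2) N.

Definition poly_tractable (lam : nat -> R) (I : nat -> nat -> bool) : Prop :=
  exists C p q, C > 0 /\ p > 0 /\ q >= 0 /\
    forall d eps, (1 <= d)%nat -> 0 < eps <= 1 ->
      info_compl_le lam I eps d (C * Rpower eps (- p) * Rpower (INR d) q).

Definition strongly_poly_tractable (lam : nat -> R) (I : nat -> nat -> bool) : Prop :=
  exists C p, C > 0 /\ p > 0 /\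
    forall d eps, (1 <= d)%nat -> 0 < eps <= 1 ->
      info_compl_le lam I eps d (C * Rpower eps (- p)).

Definition in_ell (lam : nat -> R) (tau : R) : Prop :=
  exists s, infinite_sum (fun n => rpow (lam (S n)) tau) s.

Definition b_bounded (I : nat -> nat -> bool) : Prop :=
  exists C, forall d, (1 <= d)%nat -> INR (b_of I d) <= C.

Definition b_log (I : nat -> nat -> bool) : Prop :=
  exists C, forall d, (2 <= d)%nat -> INR (b_of I d) <= C * ln (INR d).

(* Main.v *)
Require Import Defs.
From Stdlib Require Import Reals.
From Stdlib Require Import Lra Lia List Sorted ZArith.
Import ListNotations.
Open Scope R_scope.

Definition sumR {A} (g : A -> R) (l : list A) : R := fold_right (fun x acc => g x + acc) 0 l.
Definition prodR {A} (g : A -> R) (l : list A) : R := fold_right (fun x acc => g x * acc) 1 l.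

Lemma sumR_app {A} (g : A -> R) l1 l2 : sumR g (l1 ++ l2) = sumR g l1 + sumR g l2.
Proof. induction l1; simpl; [lra|]. rewrite IHl1; lra. Qed.

Lemma prodR_app {A} (g : A -> R) l1 l2 : prodR g (l1 ++ l2) = prodR g l1 * prodR g l2.
Proof. induction l1; simpl; [lra|]. rewrite IHl1; lra. Qed.

Lemma sumR_nonneg {A} (g : A -> R) l : (forall x, In x l -> 0 <= g x) -> 0 <= sumR g l.
Proof. induction l; simpl; intros H; [lra|].
  assert (0 <= g a) by auto. assert (0 <= sumR g l) by auto. lra. Qed.

Lemma sumR_le {A} (g h : A -> R) l : (forall x, In x l -> g x <= h x) -> sumR g l <= sumR h l.
Proof. induction l; simpl; intros H; [lra|].
  assert (g a <= h a) by auto. assert (sumR g l <= sumR h l) by auto. lra. Qed.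

Lemma sumR_ext {A} (g h : A -> R) l : (forall x, In x l -> g x = h x) -> sumR g l = sumR h l.
Proof. induction l; simpl; intros H; [lra|]. rewrite H, IHl; auto. Qed.

Lemma prodR_ext {A} (g h : A -> R) l : (forall x, In x l -> g x = h x) -> prodR g l = prodR h l.
Proof. induction l; simpl; intros H; [lra|]. rewrite H, IHl; auto. Qed.

Lemma sumR_map {A B} (g : B -> R) (f : A -> B) l : sumR g (map f l) = sumR (fun x => g (f x)) l.
Proof. induction l; simpl; auto. rewrite IHl; auto. Qed.

Lemma prodR_map {A B} (g : B -> R) (f : A -> B) l : prodR g (map f l) = prodR (fun x => g (f x)) l.
Proof. induction l; simpl; auto. rewrite IHl; auto. Qed.

Lemma sumR_scal {A} (g : A -> R) c l : sumR (fun x => c * g x) l = c * sumR g l.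
Proof. induction l; simpl; [lra|]. rewrite IHl; lra. Qed.

Lemma sumR_flat_map {A B} (g : B -> R) (F : A -> list B) l :
  sumR g (flat_map F l) = sumR (fun x => sumR g (F x)) l.
Proof. induction l; simpl; auto. rewrite sumR_app, IHl; auto. Qed.

Lemma sumR_list_prod {A B} (F : A * B -> R) l1 l2 :
  sumR F (list_prod l1 l2) = sumR (fun a => sumR (fun b => F (a, b)) l2) l1.
Proof. induction l1; simpl; auto. rewrite sumR_app, IHl1, sumR_map; auto. Qed.

Lemma prodR_nonneg {A} (g : A -> R) l : (forall x, In x l -> 0 <= g x) -> 0 <= prodR g l.
Proof. induction l; simpl; intros H; [lra|].
  assert (0 <= g a) by auto. assert (0 <= prodR g l) by auto. nra. Qed.

Lemma prodR_le1 {A} (g : A -> R) l : (forall x, In x l -> 0 <= g x <= 1) -> prodR g l <= 1.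
Proof. induction l; simpl; intros H; [lra|].
  assert (0 <= g a <= 1) by auto. assert (prodR g l <= 1) by auto.
  assert (0 <= prodR g l) by (apply prodR_nonneg; intros; apply H; auto). nra. Qed.

Lemma prodR_const {A} (g : A -> R) c l : (forall x, In x l -> g x = c) -> prodR g l = c ^ length l.
Proof. induction l; simpl; intros H; auto. rewrite H, IHl; auto. Qed.

Lemma prodR_filter {A} (g : A -> R) (p : A -> bool) l :
  prodR g l = prodR g (filter p l) * prodR g (filter (fun x => negb (p x)) l).
Proof. induction l; simpl; [lra|]. destruct (p a); simpl; rewrite IHl; lra. Qed.

Lemma lam_dk_prodR lam k : lam_dk lam k = prodR lam k.
Proof. unfold lam_dk. induction k; simpl; auto. rewrite IHk; auto. Qed.

Lemma sumR_remove {A} (dec : forall x y : A, {x = y} + {x <> y}) (g : A -> R) e ls :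
  NoDup ls -> In e ls -> sumR g ls = g e + sumR g (remove dec e ls).
Proof.
  induction ls as [|x r IH]; simpl; intros Hn Hi; [contradiction|].
  inversion Hn; subst. destruct (dec e x) as [->|Hne].
  - rewrite notin_remove by auto. lra.
  - destruct Hi as [->|Hi]; [congruence|]. simpl. rewrite IH by auto. lra.
Qed.

Lemma NoDup_remove' {A} (dec : forall x y : A, {x = y} + {x <> y}) e ls :
  NoDup ls -> NoDup (remove dec e ls).
Proof.
  induction ls as [|x r IH]; simpl; intros Hn; auto. inversion Hn; subst.
  destruct (dec e x); auto. constructor; auto. intros Hin. apply in_remove in Hin. tauto.
Qed.

Lemma sub_sum {A} (dec : forall x y : A, {x = y} + {x <> y}) (g : A -> R) :
  (forall x, 0 <= g x) -> forall en ls, NoDup ls -> incl ls en -> sumR g ls <= sumR g en.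
Proof.
  intros Hg en. induction en as [|e en IH]; intros ls Hn Hi.
  - destruct ls as [|x ls]; simpl; [lra|]. exfalso. apply (Hi x); simpl; auto.
  - simpl. destruct (in_dec dec e ls) as [Hin|Hnin].
    + rewrite (sumR_remove dec g e ls) by auto.
      assert (sumR g (remove dec e ls) <= sumR g en); [|lra].
      apply IH. apply NoDup_remove'; auto.
      intros y Hy. apply in_remove in Hy. destruct Hy as [Hy Hne].
      destruct (Hi y Hy) as [->|?]; [congruence|auto].
    + assert (sumR g ls <= sumR g en); [|specialize (Hg e); lra].
      apply IH; auto. intros y Hy. destruct (Hi y Hy) as [->|?]; [contradiction|auto].
Qed.

Lemma count_le_sum {A} (g : A -> R) l : (forall x, In x l -> 1 <= g x) -> INR (length l) <= sumR g l.
Proof. induction l as [|a l IH]; intros H. simpl; lra.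
  change (length (a :: l)) with (S (length l)). rewrite S_INR. simpl sumR.
  assert (1 <= g a) by (apply H; simpl; auto). assert (INR (length l) <= sumR g l) by (apply IH; intros; apply H; simpl; auto). lra. Qed.

Lemma NoDup_map_on {A B} (f : A -> B) l :
  (forall x y, In x l -> In y l -> f x = f y -> x = y) -> NoDup l -> NoDup (map f l).
Proof.
  induction l as [|a l IH]; simpl; intros Hinj Hn; constructor; inversion Hn; subst.
  - intros Hin. apply in_map_iff in Hin. destruct Hin as [y [Hy Hyl]].
    assert (y = a) by (apply Hinj; auto). subst; contradiction.
  - apply IH; auto.
Qed.

Lemma card_via_weight {T} (A : T -> Prop) (h : T -> list nat) (g : list nat -> R) en :
  (forall z, 0 <= g z) ->
  (forall x y, A x -> A y -> h x = h y -> x = y) ->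
  (forall x, A x -> In (h x) en) -> (forall x, A x -> 1 <= g (h x)) ->
  card_le A (sumR g en).
Proof.
  intros Hg Hinj Hin Hw l Hn Hl.
  rewrite <- (length_map h). apply Rle_trans with (sumR g (map h l)).
  - apply count_le_sum. intros z Hz. apply in_map_iff in Hz. destruct Hz as [x [<- Hx]]; auto.
  - apply (sub_sum (list_eq_dec Nat.eq_dec)); [exact Hg| |].
    + apply NoDup_map_on; [|exact Hn]. intros x y Hx Hy; apply Hinj; auto.
    + intros z Hz. apply in_map_iff in Hz. destruct Hz as [x [<- Hx]]; auto.
Qed.

Lemma card_le_mono {T} (A : T -> Prop) N1 N2 : card_le A N1 -> N1 <= N2 -> card_le A N2.
Proof. intros H Hle l Hn Hl. specialize (H l Hn Hl). lra. Qed.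

Fixpoint enum (V : list nat) (r : nat) : list (list nat) :=
  match r with
  | O => [[]]
  | S r' => flat_map (fun x => map (cons x) (enum V r')) V
  end.

Lemma In_enum V r w : length w = r -> (forall x, In x w -> In x V) -> In w (enum V r).
Proof.
  revert w; induction r as [|r IH]; intros w Hl Hw; destruct w as [|x w]; simpl in *; try lia; auto.
  apply in_flat_map. exists x. split; auto. apply in_map. apply IH; auto.
Qed.

Lemma In_enum_inv V r w : In w (enum V r) -> length w = r /\ (forall x, In x w -> In x V).
Proof.
  revert w; induction r as [|r IH]; intros w H; simpl in H.
  - destruct H as [<-|[]]; simpl; split; auto; intros _ [].
  - apply in_flat_map in H. destruct H as [x [Hx H]]. apply in_map_iff in H.
    destruct H as [w' [<- Hw']]. apply IH in Hw'. destruct Hw'. simpl; split; auto.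
    intros y [<-|Hy]; auto.
Qed.

Lemma sum_enum (f : nat -> R) V r : sumR (prodR f) (enum V r) = (sumR f V) ^ r.
Proof.
  induction r as [|r IH]; [simpl; lra|]. simpl enum. rewrite sumR_flat_map.
  transitivity (sumR (fun x => (sumR f V)^r * f x) V).
  - apply sumR_ext. intros x _. rewrite sumR_map. simpl prodR.
    rewrite sumR_scal, IH. lra.
  - rewrite sumR_scal. simpl. lra.
Qed.

Lemma length_enum V r : length (enum V r) = (length V ^ r)%nat.
Proof.
  induction r as [|r IH]; [reflexivity|]. cbn [enum Nat.pow]. rewrite <- IH.
  generalize (enum V r) as E. intros E. clear IH.
  induction V as [|a V IHV]; simpl; auto. rewrite length_app, length_map, IHV. lia.
Qed.

Lemma NoDup_enum V r : NoDup V -> NoDup (enum V r).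
Proof.
  intros HV. induction r as [|r IH]. simpl. constructor; [intros []|constructor].
  cbn [enum]. generalize (enum V r) IH. intros E HE. clear IH.
  induction V as [|a V IHV]; simpl; [constructor|]. inversion HV; subst.
  apply NoDup_app.
  - apply NoDup_map_on; auto. intros x y _ _ H; injection H; auto.
  - apply IHV; auto.
  - intros w Hw1 Hw2. apply in_map_iff in Hw1. destruct Hw1 as [w1 [<- _]].
    apply in_flat_map in Hw2. destruct Hw2 as [x [Hx Hw2]]. apply in_map_iff in Hw2.
    destruct Hw2 as [w2 [Heq _]]. injection Heq; intros; subst. contradiction.
Qed.


Lemma exp_le x y : x <= y -> exp x <= exp y.
Proof. intros [H| ->]; [left; apply exp_increasing; auto|lra]. Qed.

Lemma ln_le x y : 0 < x -> x <= y -> ln x <= ln y.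
Proof. intros Hx [H| ->]; [left; apply ln_increasing; auto|lra]. Qed.

Lemma rpow_pos x t : 0 < x -> rpow x t = Rpower x t.
Proof. intros Hx. unfold rpow. destruct (Req_dec_T x 0); [lra|auto]. Qed.

Lemma rpow_0 t : rpow 0 t = 0.
Proof. unfold rpow. destruct (Req_dec_T 0 0); [auto|lra]. Qed.

Lemma rpow_nonneg x t : 0 <= rpow x t.
Proof. unfold rpow. destruct (Req_dec_T x 0); [lra|]. unfold Rpower. left; apply exp_pos. Qed.

Lemma rpow_gt0 x t : 0 < x -> 0 < rpow x t.
Proof. intros; rewrite rpow_pos by auto. unfold Rpower; apply exp_pos. Qed.

Lemma rpow_mult x y t : 0 <= x -> 0 <= y -> rpow (x * y) t = rpow x t * rpow y t.
Proof.
  intros Hx Hy. destruct Hx as [Hx| <-]; [|rewrite Rmult_0_l, !rpow_0; lra].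
  destruct Hy as [Hy| <-]; [|rewrite Rmult_0_r, !rpow_0; lra].
  rewrite !rpow_pos by nra. symmetry. apply Rpower_mult_distr; auto.
Qed.

Lemma rpow_1 t : rpow 1 t = 1.
Proof. rewrite rpow_pos by lra. unfold Rpower. rewrite ln_1, Rmult_0_r, exp_0. auto. Qed.

Lemma rpow_le x y t : 0 <= x <= y -> 0 < t -> rpow x t <= rpow y t.
Proof.
  intros [Hx Hxy] Ht. destruct Hx as [Hx| <-]; [|rewrite rpow_0; apply rpow_nonneg].
  rewrite !rpow_pos by lra. unfold Rpower. apply exp_le. apply Rmult_le_compat_l; [lra|].
  apply ln_le; auto.
Qed.

Lemma rpow_lt x y t : 0 <= x < y -> 0 < t -> rpow x t < rpow y t.
Proof.
  intros [Hx Hxy] Ht. destruct Hx as [Hx| <-]; [|rewrite rpow_0; apply rpow_gt0; lra].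
  rewrite !rpow_pos by lra. unfold Rpower. apply exp_increasing. apply Rmult_lt_compat_l; [lra|].
  apply ln_increasing; auto.
Qed.

Lemma rpow_le1 x t : 0 <= x <= 1 -> 0 < t -> rpow x t <= 1.
Proof. intros. rewrite <- (rpow_1 t). apply rpow_le; auto. Qed.

Lemma rpow_plus x a b : 0 <= x -> rpow x (a + b) = rpow x a * rpow x b.
Proof. intros [Hx| <-]; [|rewrite !rpow_0; lra]. rewrite !rpow_pos by auto. apply Rpower_plus. Qed.

Lemma prodR_rpow (lam : nat -> R) t z : (forall x, In x z -> 0 <= lam x) ->
  prodR (fun j => rpow (lam j) t) z = rpow (prodR lam z) t.
Proof.
  induction z as [|a z IH]; intros H; simpl. rewrite rpow_1; auto.
  rewrite rpow_mult. rewrite IH; auto. intros; apply H; simpl; auto. apply H; simpl; auto.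
  apply prodR_nonneg. intros; apply H; simpl; auto.
Qed.

Lemma lam_mono lam : admissible_eigs lam -> forall i j, (1 <= i <= j)%nat -> lam j <= lam i.
Proof.
  intros [H0 [H1 _]] i j Hij. destruct Hij as [Hi Hij]. induction Hij; [lra|].
  apply Rle_trans with (lam m); auto. apply H1; lia.
Qed.

Lemma lam_nonneg lam : admissible_eigs lam -> forall j, (1 <= j)%nat -> 0 <= lam j.
Proof. intros [H _]; auto. Qed.

Fixpoint senum (M : nat) (a : nat) (m : nat) : list (list nat) :=
  match a with
  | O => [[]]
  | S a' => [] :: flat_map (fun x => map (cons x) (senum M a' x)) (seq m (S M - m))
  end.

Lemma In_senum M a m w : StronglySorted le w -> (forall x, In x w -> (m <= x <= M)%nat) ->
  (length w <= a)%nat -> In w (senum M a m).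
Proof.
  revert m w; induction a as [|a IH]; intros m w Hs Hw Hl; destruct w as [|x w]; simpl in *; auto; try lia.
  right. apply in_flat_map. exists x. split.
  - apply in_seq. assert (m <= x <= M)%nat by (apply Hw; left; auto). replace (S M - m)%nat with (S M - m)%nat by reflexivity. destruct m; lia.
  - apply in_map. inversion Hs; subst. apply IH; auto; [|lia].
    intros y Hy. split. rewrite Forall_forall in H2. auto. apply Hw; auto.
Qed.

Definition Tsum (f : nat -> R) M a m := sumR (prodR f) (senum M a m).

Lemma Tsum_S f M a m : Tsum f M (S a) m = 1 + sumR (fun x => f x * Tsum f M a x) (seq m (S M - m)).
Proof.
  unfold Tsum. cbn [senum].
  change (sumR (prodR f) ([] :: flat_map (fun x => map (cons x) (senum M a x)) (seq m (S M - m))))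
    with (prodR f [] + sumR (prodR f) (flat_map (fun x => map (cons x) (senum M a x)) (seq m (S M - m)))).
  rewrite sumR_flat_map. simpl prodR. f_equal.
  apply sumR_ext. intros x _. rewrite sumR_map. simpl prodR. apply sumR_scal.
Qed.

Lemma sumR_seq_sub (f : nat -> R) m0 m n : (forall j, 0 <= f j) -> (m0 <= m)%nat ->
  sumR f (seq m n) <= sumR f (seq m0 ((m - m0) + n)).
Proof.
  intros Hf Hm. rewrite seq_app. rewrite sumR_app. replace (m0 + (m - m0))%nat with m by lia.
  assert (0 <= sumR f (seq m0 (m - m0))) by (apply sumR_nonneg; auto). lra.
Qed.

Lemma Tsum_bound (f : nat -> R) M m0 :
  (forall j, 0 <= f j) -> (forall j, (1 <= j <= m0)%nat -> f j <= 1) ->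
  (forall n, sumR f (seq (S m0) n) <= 1/2) ->
  forall a m, (1 <= m)%nat -> Tsum f M a m <= 2 * (INR a + 1) ^ (S m0 - m).
Proof.
  intros Hf0 Hf1 Hs. induction a as [|a IH]; intros m Hm.
  - unfold Tsum. simpl. rewrite Rplus_0_l, pow1. lra.
  - assert (Hbig : forall m, (m0 < m)%nat -> Tsum f M (S a) m <= 2).
    { intros m' Hm'. rewrite Tsum_S.
      assert (sumR (fun x => f x * Tsum f M a x) (seq m' (S M - m')) <= sumR (fun x => 2 * f x) (seq m' (S M - m'))).
      { apply sumR_le. intros x Hx. apply in_seq in Hx.
        assert (Tsum f M a x <= 2). { specialize (IH x ltac:(lia)). replace (S m0 - x)%nat with 0%nat in IH by lia.
          simpl in IH. lra. }
        specialize (Hf0 x). nra. }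
      rewrite sumR_scal in H.
      assert (sumR f (seq m' (S M - m')) <= 1/2).
      { eapply Rle_trans. apply (sumR_seq_sub f (S m0)); auto. apply Hs. }
      lra. }
    remember (S m0 - m)%nat as e eqn:He. revert m Hm He. induction e as [|e IHe]; intros m Hm He.
    + simpl. rewrite Rmult_1_r. apply Hbig; lia.
    + destruct (Compare_dec.le_lt_dec m M) as [HmM|HmM].
      * assert (Hrec : Tsum f M (S a) m = f m * Tsum f M a m + Tsum f M (S a) (S m)).
        { rewrite !Tsum_S. replace (S M - m)%nat with (S (S M - S m)) by lia. simpl seq. simpl sumR. lra. }
        rewrite Hrec. specialize (IH m Hm). rewrite <- He in IH.
        specialize (IHe (S m) ltac:(lia) ltac:(lia)).
        assert (f m <= 1) by (apply Hf1; lia). pose proof (Hf0 m) as Hfm.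
        assert (0 <= Tsum f M a m) by (apply sumR_nonneg; intros; apply prodR_nonneg; auto).
        rewrite S_INR in *.
        assert (Hp : (INR a + 1) ^ S e <= (INR a + 1) * (INR a + 1 + 1) ^ e).
        { simpl. apply Rmult_le_compat_l. pose proof (pos_INR a); lra. apply pow_incr. pose proof (pos_INR a); lra. }
        assert (f m * Tsum f M a m <= 2 * (INR a + 1) ^ S e).
        { apply Rle_trans with (1 * Tsum f M a m). apply Rmult_le_compat_r; lra. lra. }
        simpl. pose proof (pos_INR a). nra.
      * rewrite Tsum_S. replace (S M - m)%nat with 0%nat by lia. rewrite S_INR. simpl seq. simpl sumR. simpl pow.
        assert (1 <= (INR a + 1 + 1) ^ e). { apply pow_R1_Rle. pose proof (pos_INR a); lra. }
        pose proof (pos_INR a). nra.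
Qed.


Definition Plist (I : nat -> nat -> bool) d := filter (fun i => I d i) (seq 1 d).
Definition Flist (I : nat -> nat -> bool) d := filter (fun i => negb (I d i)) (seq 1 d).

Lemma card_I_P I d : card_I I d = length (Plist I d).
Proof. reflexivity. Qed.

Lemma b_of_F I d : b_of I d = length (Flist I d).
Proof. unfold b_of, card_I, Flist. pose proof (filter_length (fun i => I d i) (seq 1 d)).
  rewrite length_seq in H. lia. Qed.

Lemma In_P I d l : In l (Plist I d) <-> (1 <= l <= d)%nat /\ I d l = true.
Proof. unfold Plist. rewrite filter_In, in_seq. split; intros [? ?]; split; auto; lia. Qed.

Lemma In_F I d l : In l (Flist I d) <-> (1 <= l <= d)%nat /\ I d l = false.
Proof. unfold Flist. rewrite filter_In, in_seq.
  split; intros [? ?]; split; try lia; destruct (I d l); simpl in *; auto; congruence. Qed.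

Lemma kth_map_seq (g : nat -> nat) d l : (1 <= l <= d)%nat -> kth (map g (seq 1 d)) l = g l.
Proof.
  intros Hl. unfold kth. rewrite nth_indep with (d' := g 0%nat) by (rewrite length_map, length_seq; lia).
  rewrite map_nth, seq_nth by lia. f_equal; lia.
Qed.

Lemma k_as_map k : k = map (kth k) (seq 1 (length k)).
Proof.
  apply nth_ext with (d := 0%nat) (d' := 0%nat). rewrite length_map, length_seq; auto.
  intros n Hn. rewrite (nth_indep (map (kth k) (seq 1 (length k))) 0%nat (kth k 0%nat)) by (rewrite length_map, length_seq; lia).
  rewrite map_nth, seq_nth by lia. unfold kth. f_equal. lia.
Qed.

Lemma kth_In k l : (1 <= l <= length k)%nat -> In (kth k l) k.
Proof. intros. unfold kth. apply nth_In. lia. Qed.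

Lemma SS_seq s n : StronglySorted lt (seq s n).
Proof. revert s; induction n; intros s; simpl; constructor; auto.
  apply Forall_forall. intros x Hx. apply in_seq in Hx. lia. Qed.

Lemma SS_filter {A} (R : A -> A -> Prop) p l : StronglySorted R l -> StronglySorted R (filter p l).
Proof. induction l; simpl; intros H; auto. inversion H; subst.
  destruct (p a); auto. constructor; auto. rewrite Forall_forall in *.
  intros x Hx. apply filter_In in Hx. apply H3; tauto. Qed.

Lemma SS_map (g : nat -> nat) P : StronglySorted lt P ->
  (forall i j, In i P -> In j P -> (i < j)%nat -> (g i <= g j)%nat) -> StronglySorted le (map g P).
Proof.
  induction P as [|a P IH]; simpl; intros Hs Hg; constructor; inversion Hs; subst.
  - apply IH; auto.
  - rewrite Forall_forall in *. intros y Hy. apply in_map_iff in Hy. destruct Hy as [x [<- Hx]].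
    apply Hg; auto.
Qed.

Lemma filter_all2 v : (forall x, In x v -> (2 <= x)%nat) -> filter (Nat.leb 2) v = v.
Proof. induction v; intros H; auto. assert (2 <= a)%nat by (apply H; simpl; auto).
  assert (E : Nat.leb 2 a = true) by (apply Nat.leb_le; auto).
  change (filter (Nat.leb 2) (a :: v)) with (if Nat.leb 2 a then a :: filter (Nat.leb 2) v else filter (Nat.leb 2) v).
  rewrite E, IHv; auto. intros; apply H; simpl; auto. Qed.

Lemma sorted_repr v : StronglySorted le v -> (forall x, In x v -> (1 <= x)%nat) ->
  v = repeat 1%nat (length v - length (filter (Nat.leb 2) v)) ++ filter (Nat.leb 2) v.
Proof.
  induction v as [|x r IH]; intros Hs Hv; auto. inversion Hs; subst.
  assert (1 <= x)%nat by (apply Hv; simpl; auto).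
  change (filter (Nat.leb 2) (x :: r)) with (if Nat.leb 2 x then x :: filter (Nat.leb 2) r else filter (Nat.leb 2) r).
  destruct (Nat.leb 2 x) eqn:Ex.
  - apply Nat.leb_le in Ex. rewrite filter_all2.
    + cbn [length]. replace (S (length r) - S (length r))%nat with 0%nat by lia. auto.
    + intros y Hy. rewrite Forall_forall in H2. specialize (H2 y Hy). lia.
  - apply Nat.leb_gt in Ex. assert (x = 1%nat) by lia. subst.
    pose proof (filter_length_le (Nat.leb 2) r). cbn [length].
    replace (S (length r) - length (filter (Nat.leb 2) r))%nat with (S (length r - length (filter (Nat.leb 2) r))) by lia.
    cbn [repeat app]. f_equal. apply IH; auto. intros; apply Hv; simpl; auto.
Qed.

Lemma app_inv_len {A} (a a' b b' : list A) : length a = length a' -> a ++ b = a' ++ b' -> a = a' /\ b = b'.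
Proof.
  revert a'; induction a as [|x a IH]; intros [|y a'] Hl He; simpl in *; try lia; auto.
  injection He; intros. injection Hl; intros. destruct (IH a' H1 H); subst; auto.
Qed.

Lemma map_eq_In {A B} (g g' : A -> B) l : map g l = map g' l -> forall x, In x l -> g x = g' x.
Proof. induction l; simpl; intros H x Hx; [contradiction|]. injection H; intros.
  destruct Hx as [<-|?]; auto. Qed.

Lemma prodR_split_P lam I d k : length k = d ->
  prodR lam k = prodR lam (map (kth k) (Flist I d)) * prodR lam (map (kth k) (Plist I d)).
Proof.
  intros Hl. rewrite (k_as_map k) at 1. rewrite Hl. rewrite !prodR_map.
  rewrite (prodR_filter _ (fun i => I d i)). unfold Flist, Plist. lra.
Qed.


Lemma sumR_le_len {A} (g : A -> R) c l : (forall x, In x l -> g x <= c) -> sumR g l <= c * INR (length l).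
Proof. induction l; intros H; simpl sumR. simpl; lra. change (length (a :: l)) with (S (length l)).
  rewrite S_INR. assert (g a <= c) by (apply H; simpl; auto).
  assert (sumR g l <= c * INR (length l)) by (apply IHl; intros; apply H; simpl; auto). lra. Qed.

Lemma sorted_eq v v' : StronglySorted le v -> (forall x, In x v -> (1 <= x)%nat) ->
  StronglySorted le v' -> (forall x, In x v' -> (1 <= x)%nat) ->
  length v = length v' -> filter (Nat.leb 2) v = filter (Nat.leb 2) v' -> v = v'.
Proof.
  intros H1 H2 H3 H4 H5 H6. transitivity (repeat 1%nat (length v - length (filter (Nat.leb 2) v)) ++ filter (Nat.leb 2) v).
  apply sorted_repr; auto. rewrite H5, H6. symmetry. apply sorted_repr; auto.
Qed.

Lemma UB lam I m0 tau : admissible_eigs lam -> admissible_I I -> lam 1%nat <= 1 -> 0 < tau ->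
  (forall n, sumR (fun j => rpow (lam j) tau) (seq (S m0) n) <= 1/2) ->
  forall d eps, (1 <= d)%nat -> 0 < eps ->
  info_compl_le lam I eps d
    (2 * (INR m0 + 1) ^ (b_of I d) * (INR (card_I I d) + 1) ^ (m0 - 1) / rpow (eps ^ 2) tau).
Proof.
  intros Hlam HI Hl1 Htau Hs d eps Hd Heps l Hn Hl.
  set (f := fun j => rpow (lam j) tau).
  set (M := list_max (concat l)).
  set (A' := fun k => (in_nabla_sym I d k /\ lam_dk lam k > eps ^ 2) /\ forall x, In x k -> (x <= M)%nat).
  set (h := fun k => map (kth k) (Flist I d) ++ filter (Nat.leb 2) (map (kth k) (Plist I d))).
  set (en := map (fun p => fst p ++ snd p) (list_prod (enum (seq 1 M) (b_of I d)) (senum M (card_I I d) 2))).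
  set (E := rpow (eps ^ 2) tau).
  assert (HE : 0 < E) by (apply rpow_gt0; nra).
  set (g := fun z => prodR f z / E).
  assert (Hf0 : forall j, 0 <= f j) by (intros; apply rpow_nonneg).
  assert (Hf1 : forall j, (1 <= j <= m0)%nat -> f j <= 1).
  { intros j Hj. apply rpow_le1; auto. split. apply lam_nonneg; auto; lia.
    apply Rle_trans with (lam 1%nat); auto. apply lam_mono; auto; lia. }
  assert (Hcard : card_le A' (sumR g en)).
  { apply card_via_weight with (h := h).
    - intros z. unfold g. apply Rmult_le_pos. apply prodR_nonneg; auto. left; apply Rinv_0_lt_compat; auto.
    -
      intros k k' [[[Hk1 [Hk2 Hk3]] _] _] [[[Hk1' [Hk2' Hk3']] _] _] Heq. unfold h in Heq.
      apply app_inv_len in Heq; [|rewrite !length_map; auto]. destruct Heq as [HU HW].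
      assert (Hsort : forall k, length k = d -> (forall i j, I d i = true -> I d j = true -> (i < j)%nat -> (kth k i <= kth k j)%nat) ->
                StronglySorted le (map (kth k) (Plist I d))).
      { intros kk _ H3. apply SS_map. apply SS_filter, SS_seq.
        intros i j Hi Hj Hij. apply In_P in Hi. apply In_P in Hj. apply H3; tauto. }
      assert (Hge1 : forall k, length k = d -> (forall x, In x k -> (1 <= x)%nat) -> forall x, In x (map (kth k) (Plist I d)) -> (1 <= x)%nat).
      { intros kk Hlen H2 x Hx. apply in_map_iff in Hx. destruct Hx as [i [<- Hi]]. apply In_P in Hi.
        apply H2. apply kth_In. lia. }
      assert (HV : map (kth k) (Plist I d) = map (kth k') (Plist I d)).
      { apply sorted_eq; [apply Hsort; auto | apply Hge1; auto | apply Hsort; auto | apply Hge1; auto | rewrite !length_map; auto | exact HW]. }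
      apply nth_ext with (d := 0%nat) (d' := 0%nat). lia.
      intros n Hn'. replace (nth n k 0%nat) with (kth k (S n)) by (unfold kth; f_equal; lia).
      replace (nth n k' 0%nat) with (kth k' (S n)) by (unfold kth; f_equal; lia).
      destruct (I d (S n)) eqn:EI.
      + apply (map_eq_In _ _ _ HV). apply In_P. split; auto; lia.
      + apply (map_eq_In _ _ _ HU). apply In_F. split; auto; lia.
    -
      intros k [[[Hk1 [Hk2 Hk3]] Hk4] HkM]. unfold h, en. apply in_map_iff.
      exists (map (kth k) (Flist I d), filter (Nat.leb 2) (map (kth k) (Plist I d))). split; auto.
      apply in_prod.
      + apply In_enum. rewrite length_map, b_of_F; auto.
        intros x Hx. apply in_map_iff in Hx. destruct Hx as [i [<- Hi]]. apply In_F in Hi.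
        assert (In (kth k i) k) by (apply kth_In; lia). apply in_seq.
        assert (1 <= kth k i)%nat by auto. assert (kth k i <= M)%nat by auto. lia.
      + apply In_senum.
        * apply SS_filter. apply SS_map. apply SS_filter, SS_seq.
          intros i j Hi Hj Hij. apply In_P in Hi. apply In_P in Hj. apply Hk3; tauto.
        * intros x Hx. apply filter_In in Hx. destruct Hx as [Hx Hx2]. apply Nat.leb_le in Hx2.
          apply in_map_iff in Hx. destruct Hx as [i [<- Hi]]. apply In_P in Hi.
          assert (In (kth k i) k) by (apply kth_In; lia). split; auto.
        * rewrite card_I_P. eapply Nat.le_trans. apply filter_length_le. rewrite length_map; auto.
    -
      intros k [[[Hk1 [Hk2 Hk3]] Hk4] HkM]. unfold g.
      assert (Hnn : forall x, In x (h k) -> 0 <= lam x).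
      { intros x Hx. apply lam_nonneg; auto. unfold h in Hx. apply in_app_iff in Hx.
        destruct Hx as [Hx|Hx]; [|apply filter_In in Hx; destruct Hx as [Hx _]];
        apply in_map_iff in Hx; destruct Hx as [i [<- Hi]];
        [apply In_F in Hi|apply In_P in Hi]; apply Hk2; apply kth_In; lia. }
      unfold f. rewrite prodR_rpow by auto.
      apply Rmult_le_reg_r with E; auto. unfold Rdiv. rewrite Rmult_assoc, Rinv_l by lra.
      rewrite Rmult_1_r, Rmult_1_l. unfold E. apply rpow_le; auto. split. nra.
      left. apply Rlt_le_trans with (lam_dk lam k); auto. rewrite lam_dk_prodR.
      rewrite (prodR_split_P lam I d k Hk1). unfold h. rewrite prodR_app.
      set (v := map (kth k) (Plist I d)). set (u := map (kth k) (Flist I d)).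
      assert (Hv : forall x, In x v -> 0 <= lam x <= 1).
      { intros x Hx. assert (1 <= x)%nat.
        { unfold v in Hx. apply in_map_iff in Hx. destruct Hx as [i [<- Hi]]. apply In_P in Hi. apply Hk2, kth_In; lia. }
        split. apply lam_nonneg; auto. apply Rle_trans with (lam 1%nat); auto. apply lam_mono; auto. }
      assert (Hu : forall x, In x u -> 0 <= lam x).
      { intros x Hx. apply Hnn. unfold h. apply in_app_iff; left; auto. }
      rewrite (prodR_filter lam (Nat.leb 2) v).
      assert (0 <= prodR lam u) by (apply prodR_nonneg; auto).
      assert (0 <= prodR lam (filter (Nat.leb 2) v)) by (apply prodR_nonneg; intros x Hx; apply filter_In in Hx; apply Hv; tauto).
      assert (0 <= prodR lam (filter (fun x => negb (Nat.leb 2 x)) v) <= 1).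
      { split. apply prodR_nonneg; intros x Hx; apply filter_In in Hx; apply Hv; tauto.
        apply prodR_le1. intros x Hx; apply filter_In in Hx; apply Hv; tauto. }
      assert (0 <= prodR lam u * prodR lam (filter (Nat.leb 2) v)) by nra. nra. }
  assert (HlA : forall x, In x l -> A' x).
  { intros k Hk. split; auto. intros x Hx. unfold M.
    assert (Hc : In x (concat l)) by (apply in_concat; eauto).
    pose proof (list_max_le (concat l) (list_max (concat l))) as [H1 _].
    specialize (H1 (Nat.le_refl _)). rewrite Forall_forall in H1. auto. }
  eapply Rle_trans. apply (Hcard l Hn HlA).
  unfold en, g. rewrite sumR_map, sumR_list_prod.
  transitivity (sumR (prodR f) (enum (seq 1 M) (b_of I d)) * Tsum f M (card_I I d) 2 / E).
  - right. transitivity (sumR (fun a => (Tsum f M (card_I I d) 2 / E) * prodR f a) (enum (seq 1 M) (b_of I d))).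
    + apply sumR_ext. intros u _. unfold Tsum.
      transitivity (sumR (fun b => (prodR f u / E) * prodR f b) (senum M (card_I I d) 2)).
      * apply sumR_ext. intros w _. simpl. rewrite prodR_app. field. lra.
      * rewrite sumR_scal. field. lra.
    + rewrite sumR_scal. field. lra.
  - rewrite sum_enum. unfold Rdiv. apply Rmult_le_compat_r. left; apply Rinv_0_lt_compat; auto.
    assert (Hs1 : 0 <= sumR f (seq 1 M) <= INR m0 + 1).
    { split. apply sumR_nonneg; auto.
      apply Rle_trans with (sumR f (seq 1 (m0 + M))).
      - rewrite (Nat.add_comm m0 M), seq_app, sumR_app. assert (0 <= sumR f (seq (1 + M) m0)) by (apply sumR_nonneg; auto). lra.
      - rewrite seq_app, sumR_app. replace (1 + m0)%nat with (S m0) by lia.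
        assert (sumR f (seq 1 m0) <= 1 * INR (length (seq 1 m0))).
        { apply sumR_le_len. intros x Hx. apply in_seq in Hx. apply Hf1. lia. }
        rewrite length_seq in H. specialize (Hs M). fold f in Hs. lra. }
    assert (HT : Tsum f M (card_I I d) 2 <= 2 * (INR (card_I I d) + 1) ^ (m0 - 1)).
    { replace (m0 - 1)%nat with (S m0 - 2)%nat by lia. apply Tsum_bound; auto. }
    assert (0 <= Tsum f M (card_I I d) 2) by (apply sumR_nonneg; intros; apply prodR_nonneg; auto).
    assert (sumR f (seq 1 M) ^ b_of I d <= (INR m0 + 1) ^ b_of I d) by (apply pow_incr; lra).
    assert (0 <= sumR f (seq 1 M) ^ b_of I d) by (apply pow_le; lra).
    nra.
Qed.


Lemma sumR_seq_sum_f (G : nat -> R) N : sumR G (seq 1 (S N)) = sum_f_R0 (fun n => G (S n)) N.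
Proof.
  induction N as [|N IH]. simpl; lra.
  rewrite seq_S, sumR_app, IH. simpl. replace (S (S N)) with (S (S N)) by lia. lra.
Qed.

Lemma ell_partial lam tau0 : admissible_eigs lam -> in_ell lam tau0 ->
  exists s, 0 <= s /\ forall n, sumR (fun j => rpow (lam j) tau0) (seq 1 n) <= s.
Proof.
  intros Hlam [s Hs]. set (F := fun n => rpow (lam (S n)) tau0).
  assert (Hg : Un_growing (sum_f_R0 F)).
  { intros n. simpl. assert (0 <= F (S n)) by apply rpow_nonneg. lra. }
  assert (Hb : forall N, sum_f_R0 F N <= s) by (intros; apply growing_ineq; auto).
  exists s. split. { specialize (Hb 0%nat). simpl in Hb. assert (0 <= F 0%nat) by apply rpow_nonneg. lra. }
  intros [|n]. simpl. specialize (Hb 0%nat). simpl in Hb. assert (0 <= F 0%nat) by apply rpow_nonneg. lra.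
  rewrite sumR_seq_sum_f. apply Hb.
Qed.

Lemma TAU lam m0 tau0 : admissible_eigs lam -> 0 < tau0 -> in_ell lam tau0 -> lam (S m0) < 1 ->
  exists tau, 0 < tau /\ forall n, sumR (fun j => rpow (lam j) tau) (seq (S m0) n) <= 1/2.
Proof.
  intros Hlam Ht0 Hell Hlt. destruct (ell_partial lam tau0 Hlam Hell) as [s [Hs0 Hs]].
  set (th := Rmax (lam (S m0)) (1/2)).
  assert (Hth : 1/2 <= th < 1) by (unfold th; split; [apply Rmax_r|apply Rmax_lub_lt; lra]).
  assert (Hlnth : ln th < 0) by (rewrite <- ln_1; apply ln_increasing; lra).
  assert (Hln2 : 0 < ln (2 * s + 2)) by (rewrite <- ln_1; apply ln_increasing; lra).
  set (t := ln (2 * s + 2) / (- ln th)).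
  assert (Ht : 0 < t) by (unfold t; apply Rdiv_lt_0_compat; lra).
  assert (Hrt : rpow th t = / (2 * s + 2)).
  { rewrite rpow_pos by lra. unfold Rpower, t.
    replace (ln (2 * s + 2) / - ln th * ln th) with (- ln (2 * s + 2)) by (field; lra).
    rewrite <- ln_Rinv by lra. apply exp_ln. apply Rinv_0_lt_compat; lra. }
  exists (tau0 + t). split. lra. intros n.
  apply Rle_trans with (rpow th t * sumR (fun j => rpow (lam j) tau0) (seq (S m0) n)).
  - rewrite <- sumR_scal. apply sumR_le. intros j Hj. apply in_seq in Hj.
    assert (0 <= lam j) by (apply lam_nonneg; auto; lia).
    rewrite rpow_plus by auto. rewrite Rmult_comm. apply Rmult_le_compat_r. apply rpow_nonneg.
    apply rpow_le; auto. split; auto. apply Rle_trans with (lam (S m0)). apply lam_mono; auto; lia.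
    apply Rmax_l.
  - assert (sumR (fun j => rpow (lam j) tau0) (seq (S m0) n) <= s).
    { eapply Rle_trans. apply (sumR_seq_sub _ 1%nat). intros; apply rpow_nonneg. lia. apply Hs. }
    assert (0 <= sumR (fun j => rpow (lam j) tau0) (seq (S m0) n)) by (apply sumR_nonneg; intros; apply rpow_nonneg).
    rewrite Hrt. apply Rle_trans with (/ (2 * s + 2) * s).
    apply Rmult_le_compat_l; auto. left; apply Rinv_0_lt_compat; lra.
    apply Rmult_le_reg_l with (2 * s + 2). lra. rewrite <- Rmult_assoc, Rinv_r by lra. lra.
Qed.


Lemma inv_rpow_eps eps tau : 0 < eps -> / rpow (eps ^ 2) tau = Rpower eps (- (2 * tau)).
Proof.
  intros He. rewrite rpow_pos by nra. rewrite Rpower_Ropp. f_equal.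
  rewrite <- Rpower_pow by auto. rewrite Rpower_mult. simpl INR. f_equal; lra.
Qed.

Lemma Rpower_gt0 x y : 0 < Rpower x y.
Proof. unfold Rpower; apply exp_pos. Qed.

Lemma SPT_PT lam I : strongly_poly_tractable lam I -> poly_tractable lam I.
Proof.
  intros [C [p [HC [Hp H]]]]. exists C, p, 0. repeat split; auto; try lra.
  intros d eps Hd He. eapply card_le_mono. apply H; auto.
  rewrite Rpower_O. lra. apply lt_0_INR; lia.
Qed.

Lemma card_I_le I d : (card_I I d <= d)%nat.
Proof. unfold card_I. rewrite <- (length_seq d 1) at 2. apply filter_length_le. Qed.

Lemma suff_lt1 lam I : admissible_eigs lam -> admissible_I I -> lam 1%nat <= 1 ->
  (exists tau, tau > 0 /\ in_ell lam tau) -> lam 1%nat < 1 -> strongly_poly_tractable lam I.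
Proof.
  intros Hlam HI Hl1 [tau0 [Ht0 Hell]] Hlt.
  destruct (TAU lam 0 tau0 Hlam Ht0 Hell Hlt) as [tau [Ht Hs]].
  exists 2, (2 * tau). repeat split; try lra. intros d eps Hd [He0 He1].
  eapply card_le_mono. apply (UB lam I 0 tau); auto.
  replace (0 - 1)%nat with 0%nat by lia. simpl INR. rewrite Rplus_0_l, pow1.
  unfold Rdiv. rewrite inv_rpow_eps by auto. simpl pow. lra.
Qed.

Lemma suff_eq1_bdd lam I : admissible_eigs lam -> admissible_I I -> lam 1%nat <= 1 ->
  (exists tau, tau > 0 /\ in_ell lam tau) -> lam 2%nat < 1 -> b_bounded I -> strongly_poly_tractable lam I.
Proof.
  intros Hlam HI Hl1 [tau0 [Ht0 Hell]] Hlt [B HB].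
  destruct (TAU lam 1 tau0 Hlam Ht0 Hell Hlt) as [tau [Ht Hs]].
  exists (2 * Rpower 2 B), (2 * tau). pose proof (Rpower_gt0 2 B). repeat split; try lra. intros d eps Hd [He0 He1].
  eapply card_le_mono. apply (UB lam I 1 tau); auto.
  replace (1 - 1)%nat with 0%nat by lia. simpl pow at 2. unfold Rdiv. rewrite inv_rpow_eps by auto.
  simpl INR. replace (1 + 1) with 2 by lra.
  assert (2 ^ b_of I d <= Rpower 2 B).
  { rewrite <- Rpower_pow by lra. apply Rle_Rpower. lra. apply HB; auto. }
  pose proof (Rpower_gt0 eps (- (2 * tau))). nra.
Qed.

Lemma b_of_1 I : admissible_I I -> b_of I 1 = 0%nat.
Proof. intros [_ [_ H]]. unfold b_of, card_I. simpl seq. cbn [filter]. rewrite H. reflexivity. Qed.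

Lemma suff_eq1_log lam I : admissible_eigs lam -> admissible_I I -> lam 1%nat <= 1 ->
  (exists tau, tau > 0 /\ in_ell lam tau) -> b_log I -> poly_tractable lam I.
Proof.
  intros Hlam HI Hl1 [tau0 [Ht0 Hell]] [C0 HC0].
  pose proof Hlam as [Hl0 [Hl2 Hcv]].
  destruct (Hcv (1/2) ltac:(lra)) as [N HN].
  specialize (HN (S N) ltac:(lia)). unfold Rdist in HN. rewrite Rminus_0_r in HN.
  assert (Hlt : lam (S N) < 1) by (apply Rabs_def2 in HN; lra).
  destruct (TAU lam N tau0 Hlam Ht0 Hell Hlt) as [tau [Ht Hs]].
  set (X := INR N + 1). assert (HX : 1 <= X) by (unfold X; pose proof (pos_INR N); lra).
  set (C1 := Rmax C0 0).
  assert (HlnX : 0 <= ln X) by (rewrite <- ln_1; apply ln_le; lra).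
  assert (HC1 : 0 <= C1) by apply Rmax_r.
  exists (2 * X * 2 ^ N), (2 * tau), (C1 * ln X + INR N).
  assert (0 < 2 ^ N) by (apply pow_lt; lra).
  repeat split; try nra. pose proof (pos_INR N). nra.
  intros d eps Hd [He0 He1].
  eapply card_le_mono. apply (UB lam I N tau); auto. fold X.
  unfold Rdiv. rewrite inv_rpow_eps by auto.
  assert (Hd0 : 0 < INR d) by (apply lt_0_INR; lia).
  assert (P1 : X ^ b_of I d <= X * Rpower (INR d) (C1 * ln X)).
  { destruct (Nat.eq_dec d 1) as [->|Hd2].
    - rewrite b_of_1 by auto. simpl. unfold Rpower. rewrite ln_1, Rmult_0_r, exp_0. lra.
    - assert (Hb : INR (b_of I d) <= C1 * ln (INR d)).
      { eapply Rle_trans. apply HC0; lia. apply Rmult_le_compat_r. rewrite <- ln_1. apply ln_le; [lra|].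
        replace 1 with (INR 1) by auto. apply le_INR; lia. apply Rmax_l. }
      rewrite <- Rpower_pow by lra.
      apply Rle_trans with (Rpower (INR d) (C1 * ln X)).
      + apply Rle_trans with (Rpower X (C1 * ln (INR d))). apply Rle_Rpower; auto.
        right. unfold Rpower. f_equal. ring.
      + pose proof (Rpower_gt0 (INR d) (C1 * ln X)). nra. }
  assert (P2 : (INR (card_I I d) + 1) ^ (N - 1) <= 2 ^ N * Rpower (INR d) (INR N)).
  { rewrite Rpower_pow by auto. rewrite <- Rpow_mult_distr.
    assert (INR (card_I I d) <= INR d) by (apply le_INR, card_I_le).
    assert (1 <= INR d) by (replace 1 with (INR 1) by auto; apply le_INR; lia).
    apply Rle_trans with ((2 * INR d) ^ (N - 1)). apply pow_incr. pose proof (pos_INR (card_I I d)); lra.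
    replace N with ((N - 1) + (N - (N - 1)))%nat at 2 by lia. rewrite pow_add.
    assert (1 <= (2 * INR d) ^ (N - (N - 1))) by (apply pow_R1_Rle; lra).
    assert (0 <= (2 * INR d) ^ (N - 1)) by (apply pow_le; lra). nra. }
  rewrite Rpower_plus.
  assert (0 <= (INR (card_I I d) + 1) ^ (N - 1)) by (apply pow_le; pose proof (pos_INR (card_I I d)); lra).
  assert (0 <= X ^ b_of I d) by (apply pow_le; lra).
  pose proof (Rpower_gt0 eps (- (2 * tau))). pose proof (Rpower_gt0 (INR d) (C1 * ln X)).
  pose proof (Rpower_gt0 (INR d) (INR N)).
  set (A1 := X ^ b_of I d) in *. set (A2 := (INR (card_I I d) + 1) ^ (N - 1)) in *.
  set (R1 := Rpower eps (- (2 * tau))) in *. set (R2 := Rpower (INR d) (C1 * ln X)) in *.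
  set (R3 := Rpower (INR d) (INR N)) in *.
  apply Rle_trans with (2 * (X * R2) * (2 ^ N * R3) * R1).
  - apply Rmult_le_compat_r; [lra|]. apply Rmult_le_compat; nra.
  - right. ring.
Qed.


Lemma archi (Z : R) : exists n : nat, Z < INR n.
Proof.
  destruct (archimed Z) as [H1 _].
  destruct (Z_le_gt_dec 0 (up Z)) as [H|H].
  - exists (Z.to_nat (up Z)). rewrite INR_IZR_INZ, Z2Nat.id by auto. lra.
  - exists 0%nat. apply Z.gt_lt in H. apply IZR_lt in H. simpl. lra.
Qed.

Lemma pow_le_one x n : 0 <= x <= 1 -> x ^ n <= 1.
Proof. intros Hx. induction n; simpl; [lra|]. assert (0 <= x ^ n) by (apply pow_le; lra). nra. Qed.

Lemma pow_le_small x n m : 0 < x <= 1 -> (n <= m)%nat -> x ^ m <= x ^ n.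
Proof.
  intros Hx Hnm. replace m with (n + (m - n))%nat by lia. rewrite pow_add.
  assert (x ^ (m - n) <= 1) by (apply pow_le_one; lra).
  assert (0 <= x ^ n) by (apply pow_le; lra). nra.
Qed.

Lemma lam_dk_map lam (g : nat -> nat) d : lam_dk lam (map g (seq 1 d)) = prodR (fun l => lam (g l)) (seq 1 d).
Proof. rewrite lam_dk_prodR, prodR_map. auto. Qed.

Lemma I_range I : admissible_I I -> forall d i, I d i = true -> (1 <= i <= d)%nat.
Proof. intros [H _]; auto. Qed.

Lemma in_nabla_map I d (g : nat -> nat) : admissible_I I ->
  (forall l, (1 <= g l)%nat) ->
  (forall i j, I d i = true -> I d j = true -> (i < j)%nat -> (g i <= g j)%nat) ->
  in_nabla_sym I d (map g (seq 1 d)).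
Proof.
  intros HI Hg1 Hg. split; [rewrite length_map, length_seq; auto|split].
  - intros x Hx. apply in_map_iff in Hx. destruct Hx as [l [<- _]]. auto.
  - intros i j Hi Hj Hij. rewrite !kth_map_seq by (eapply I_range; eauto). auto.
Qed.

Lemma sq_half y : 0 < y -> Rpower y (1/2) ^ 2 = y.
Proof.
  intros Hy. rewrite <- Rpower_pow by apply Rpower_gt0. rewrite Rpower_mult. simpl INR.
  replace (1 / 2 * (1 + 1)) with 1 by lra. apply Rpower_1; auto.
Qed.

Lemma sum_inv_sq N : sum_f_R0 (fun n => / (INR (S n)) ^ 2) N <= 2 - / INR (S N).
Proof.
  induction N as [|N IH]. simpl. lra.
  rewrite tech5. rewrite (S_INR (S N)), (S_INR N) in *. set (x := INR N) in *. assert (0 <= x) by apply pos_INR.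
  assert (/ (x + 1 + 1) ^ 2 <= / (x + 1) - / (x + 1 + 1)).
  { apply Rmult_le_reg_r with ((x+1)*(x+1+1)^2). nra. 
    replace (/ (x + 1 + 1) ^ 2 * ((x + 1) * (x + 1 + 1) ^ 2)) with (x + 1) by (field; lra).
    replace ((/ (x + 1) - / (x + 1 + 1)) * ((x + 1) * (x + 1 + 1) ^ 2)) with (x + 1 + 1) by (field; lra). lra. }
  lra.
Qed.

Lemma nec_ell lam I K p : admissible_eigs lam -> admissible_I I -> lam 1%nat <= 1 -> K > 0 -> p > 0 ->
  (forall eps, 0 < eps <= 1 -> info_compl_le lam I eps 1 (K * Rpower eps (- p))) -> in_ell lam p.
Proof.
  intros Hlam HI Hl1 HK Hp H.
  set (Q := K * K * Rpower 2 p).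
  assert (HQ : 0 < Q) by (unfold Q; pose proof (Rpower_gt0 2 p); apply Rmult_lt_0_compat; nra).
  assert (Hb : forall m, (1 <= m)%nat -> rpow (lam m) p <= Q * / (INR m) ^ 2).
  { intros m Hm. assert (Hm0 : 0 < INR m) by (apply lt_0_INR; lia).
    assert (0 < / INR m ^ 2) by (apply Rinv_0_lt_compat; nra).
    destruct (lam_nonneg lam Hlam m Hm) as [Hpos| <-]; [|rewrite rpow_0; nra].
    set (eps := Rpower (lam m / 2) (1/2)).
    assert (He0 : 0 < eps) by apply Rpower_gt0.
    assert (He2 : eps ^ 2 = lam m / 2) by (apply sq_half; lra).
    assert (Hlm1 : lam m <= 1) by (apply Rle_trans with (lam 1%nat); auto; apply lam_mono; auto).
    assert (He1 : eps <= 1) by nra.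
    specialize (H eps (conj He0 He1) (map (fun j => [j]) (seq 1 m))).
    rewrite length_map, length_seq in H.
    assert (Hc : INR m <= K * Rpower eps (- p)).
    { apply H.
      - apply NoDup_map_on. intros x y _ _ E; injection E; auto. apply seq_NoDup.
      - intros k Hk. apply in_map_iff in Hk. destruct Hk as [j [<- Hj]]. apply in_seq in Hj.
        split. split; [auto|split].
        + intros x [<-|[]]. lia.
        + intros i i' Hi Hi' Hii'. apply (I_range I HI) in Hi. apply (I_range I HI) in Hi'. lia.
        + unfold lam_dk. cbn [map fold_right]. rewrite Rmult_1_r, He2.
          assert (lam m <= lam j) by (apply lam_mono; auto; lia). lra. }
    set (Y := Rpower (lam m / 2) (p / 2)).
    assert (HY : Rpower eps (- p) = / Y).
    { unfold eps, Y. rewrite Rpower_mult. replace (1 / 2 * - p) with (- (p / 2)) by lra. apply Rpower_Ropp. }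
    assert (HY0 : 0 < Y) by apply Rpower_gt0.
    rewrite HY in Hc.
    assert (INR m * Y <= K) by (apply Rmult_le_reg_r with (/ Y); [apply Rinv_0_lt_compat; auto|];
      rewrite Rmult_assoc, Rinv_r by lra; lra).
    assert (Hsq : (INR m * Y) ^ 2 <= K * K) by (assert (0 <= INR m * Y) by nra; simpl; nra).
    assert (HY2 : Y * Y = Rpower (lam m / 2) p) by (unfold Y; rewrite <- Rpower_plus; f_equal; lra).
    assert (Hl : Rpower (lam m) p = Rpower 2 p * Rpower (lam m / 2) p).
    { rewrite Rpower_mult_distr by lra. f_equal. field. }
    rewrite rpow_pos by auto. rewrite Hl, <- HY2.
    apply Rmult_le_reg_r with (INR m ^ 2). nra. unfold Q.
    replace (K * K * Rpower 2 p * / INR m ^ 2 * INR m ^ 2) with (K * K * Rpower 2 p) by (field; lra).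
    pose proof (Rpower_gt0 2 p).
    replace (Rpower 2 p * (Y * Y) * INR m ^ 2) with (Rpower 2 p * (INR m * Y) ^ 2) by ring. nra. }
  set (F := fun n => rpow (lam (S n)) p).
  assert (Hg : Un_growing (sum_f_R0 F)).
  { intros n. simpl. assert (0 <= F (S n)) by apply rpow_nonneg. lra. }
  assert (Hub : has_ub (sum_f_R0 F)).
  { exists (2 * Q). intros x [N ->].
    apply Rle_trans with (sum_f_R0 (fun n => Q * / (INR (S n)) ^ 2) N).
    - apply sum_Rle. intros n _. apply Hb. lia.
    - assert (Hsc : forall (a : nat -> R) N, sum_f_R0 (fun n => Q * a n) N = Q * sum_f_R0 a N).
      { intros a N'. induction N' as [|N' IH']. simpl; lra. rewrite !tech5, IH'. lra. }
      rewrite Hsc. pose proof (sum_inv_sq N).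
      assert (0 < / INR (S N)) by (apply Rinv_0_lt_compat, lt_0_INR; lia). nra. }
  destruct (growing_cv _ Hg Hub) as [s Hs]. exists s. exact Hs.
Qed.


Lemma nec_lam2 lam I : admissible_eigs lam -> admissible_I I -> lam 1%nat = 1 -> lam 2%nat = 1 ->
  ~ strongly_poly_tractable lam I.
Proof.
  intros Hlam HI H1 H2 [C [p [HC [Hp H]]]].
  destruct (archi (C * Rpower (1/2) (- p))) as [d Hd].
  set (g := fun t l => if Nat.leb l t then 1%nat else 2%nat).
  set (ls := map (fun t => map (g t) (seq 1 (S d))) (seq 0 (S (S d)))).
  assert (Hc : INR (length ls) <= C * Rpower (1/2) (- p)).
  { apply (H (S d) (1/2) ltac:(lia) ltac:(lra)).
    - apply NoDup_map_on; [|apply seq_NoDup].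
      intros t t' Ht Ht' E. apply in_seq in Ht. apply in_seq in Ht'.
      destruct (Nat.lt_total t t') as [Hlt|[Heq|Hlt]]; auto; exfalso.
      + assert (Hin : In t' (seq 1 (S d))) by (apply in_seq; lia).
        pose proof (map_eq_In _ _ _ E t' Hin) as Hx. unfold g in Hx.
        replace (Nat.leb t' t) with false in Hx by (symmetry; apply Nat.leb_gt; lia).
        replace (Nat.leb t' t') with true in Hx by (symmetry; apply Nat.leb_le; lia). discriminate.
      + assert (Hin : In t (seq 1 (S d))) by (apply in_seq; lia).
        pose proof (map_eq_In _ _ _ E t Hin) as Hx. unfold g in Hx.
        replace (Nat.leb t t') with false in Hx by (symmetry; apply Nat.leb_gt; lia).
        replace (Nat.leb t t) with true in Hx by (symmetry; apply Nat.leb_le; lia). discriminate.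
    - intros k Hk. apply in_map_iff in Hk. destruct Hk as [t [<- Ht]]. split.
      + apply in_nabla_map; auto.
        * intros l. unfold g. destruct (Nat.leb l t); lia.
        * intros i j _ _ Hij. unfold g. destruct (Nat.leb i t) eqn:E1, (Nat.leb j t) eqn:E2; try lia.
          apply Nat.leb_gt in E1. apply Nat.leb_le in E2. lia.
      + rewrite lam_dk_map. rewrite (prodR_const _ 1). rewrite pow1. lra.
        intros l _. unfold g. destruct (Nat.leb l t); auto. }
  unfold ls in Hc. rewrite length_map, length_seq in Hc. rewrite !S_INR in Hc.
  pose proof (pos_INR d). lra.
Qed.

Definition posF (I : nat -> nat -> bool) d K i r := nth (i * K + r) (Flist I d) 0%nat.

Lemma pos_in I d K j i r : (j * K <= b_of I d)%nat -> (i < j)%nat -> (r < K)%nat -> In (posF I d K i r) (Flist I d).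
Proof. intros Hjk **. unfold posF. apply nth_In. rewrite <- b_of_F. nia. Qed.

Lemma pos_inj I d K j i r i' r' : (j * K <= b_of I d)%nat -> (i < j)%nat -> (r < K)%nat -> (i' < j)%nat -> (r' < K)%nat ->
  posF I d K i r = posF I d K i' r' -> i = i' /\ r = r'.
Proof.
  intros Hjk Hi Hr Hi' Hr' E. unfold posF in E.
  assert (HN : NoDup (Flist I d)) by (apply NoDup_filter, seq_NoDup).
  rewrite (NoDup_nth (Flist I d) 0%nat) in HN. apply HN in E; try (rewrite <- b_of_F; nia).
  destruct (Nat.lt_total i i') as [H|[H|H]].
  - exfalso. assert (S i * K <= i' * K)%nat by (apply Nat.mul_le_mono_r; lia). simpl in H0. lia.
  - subst. lia.
  - exfalso. assert (S i' * K <= i * K)%nat by (apply Nat.mul_le_mono_r; lia). simpl in H0. lia.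
Qed.

Definition qc (I : nat -> nat -> bool) d K j (c : list nat) (l : nat) : bool :=
  existsb (fun i => Nat.eqb l (nth (i * K + nth i c 0%nat) (Flist I d) 0%nat)) (seq 0 j).

Definition gc I d K j (c : list nat) (l : nat) : nat := if qc I d K j c l then 2%nat else 1%nat.

Lemma qc_spec I d K j c l : (forall i, (i < j)%nat -> (nth i c 0%nat < K)%nat) ->
  qc I d K j c l = true <-> exists i, (i < j)%nat /\ l = posF I d K i (nth i c 0%nat).
Proof.
  intros Hc. unfold qc. rewrite existsb_exists. split.
  - intros [i [Hi E]]. apply in_seq in Hi. apply Nat.eqb_eq in E. exists i. split; [lia|auto].
  - intros [i [Hi E]]. exists i. split. apply in_seq; lia. apply Nat.eqb_eq. auto.
Qed.

Lemma fam_lemma lam I d K j : admissible_I I -> (j * K <= b_of I d)%nat -> lam 1%nat = 1 -> 0 < lam 2%nat <= 1 ->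
  exists ls, NoDup ls /\ length ls = (K ^ j)%nat /\
    forall k, In k ls -> in_nabla_sym I d k /\ lam_dk lam k >= lam 2%nat ^ j.
Proof.
  intros HI Hjk H1 H2.
  set (C := enum (seq 0 K) j).
  assert (HC : forall c, In c C -> length c = j /\ forall i, (i < j)%nat -> (nth i c 0%nat < K)%nat).
  { intros c Hc. apply In_enum_inv in Hc. destruct Hc as [Hl Hx]. split; auto.
    intros i Hi. assert (In (nth i c 0%nat) (seq 0 K)) by (apply Hx, nth_In; lia). apply in_seq in H. lia. }
  exists (map (fun c => map (gc I d K j c) (seq 1 d)) C). split; [|split].
  - apply NoDup_map_on; [|apply NoDup_enum, seq_NoDup].
    intros c c' Hc Hc' E. destruct (HC c Hc) as [Hl Hn]. destruct (HC c' Hc') as [Hl' Hn'].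
    apply nth_ext with (d := 0%nat) (d' := 0%nat); [lia|]. intros i Hi. rewrite Hl in Hi.
    set (l := posF I d K i (nth i c 0%nat)).
    assert (HlF : In l (Flist I d)) by (apply (pos_in I d K j); auto).
    assert (Hl1 : In l (seq 1 d)) by (apply In_F in HlF; apply in_seq; lia).
    pose proof (map_eq_In _ _ _ E l Hl1) as Hg. unfold gc in Hg.
    assert (Hq : qc I d K j c l = true) by (apply (qc_spec I d K j); auto; exists i; auto).
    rewrite Hq in Hg. destruct (qc I d K j c' l) eqn:Hq'; [|discriminate].
    apply (qc_spec I d K j) in Hq'; auto. destruct Hq' as [i' [Hi' E']].
    apply (pos_inj I d K j) in E'; auto. destruct E' as [<- ?]; auto.
  - rewrite length_map. unfold C. rewrite length_enum, length_seq. auto.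
  - intros k Hk. apply in_map_iff in Hk. destruct Hk as [c [<- Hc]]. destruct (HC c Hc) as [Hl Hn].
    assert (Hout : forall l, I d l = true -> gc I d K j c l = 1%nat).
    { intros l Hl'. unfold gc. destruct (qc I d K j c l) eqn:Hq; auto. apply (qc_spec I d K j) in Hq; auto.
      destruct Hq as [i [Hi ->]]. assert (Hin : In (posF I d K i (nth i c 0%nat)) (Flist I d)) by (apply (pos_in I d K j); auto).
      apply In_F in Hin. destruct Hin as [_ Hf].  congruence. }
    split.
    + apply in_nabla_map; auto.
      * intros l. unfold gc. destruct (qc I d K j c l); lia.
      * intros i i' Hi Hi' _. rewrite !Hout; auto.
    + rewrite lam_dk_map. rewrite (prodR_filter _ (qc I d K j c)).
      rewrite (prodR_const _ (lam 2%nat) (filter (qc I d K j c) (seq 1 d))).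
      2:{ intros l Hl'. apply filter_In in Hl'. unfold gc. destruct Hl' as [_ ->]. auto. }
      rewrite (prodR_const _ 1 (filter (fun x => negb (qc I d K j c x)) (seq 1 d))).
      2:{ intros l Hl'. apply filter_In in Hl'. unfold gc. destruct Hl' as [_ E]. destruct (qc I d K j c l); simpl in E; [discriminate|auto]. }
      rewrite pow1, Rmult_1_r. apply Rle_ge. apply pow_le_small; auto.
      apply Nat.le_trans with (length (map (fun i => posF I d K i (nth i c 0%nat)) (seq 0 j))); [|rewrite length_map, length_seq; lia].
      apply NoDup_incl_length. apply NoDup_filter, seq_NoDup.
      intros l Hl'. apply filter_In in Hl'. destruct Hl' as [_ Hq]. apply (qc_spec I d K j) in Hq; auto.
      destruct Hq as [i [Hi ->]]. apply in_map_iff. exists i. split; auto. apply in_seq; lia.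
Qed.


Lemma nec_bdd lam I C p : admissible_eigs lam -> admissible_I I -> lam 1%nat = 1 -> lam 2%nat > 0 ->
  (forall d eps, (1 <= d)%nat -> 0 < eps <= 1 -> info_compl_le lam I eps d (C * Rpower eps (- p))) ->
  b_bounded I.
Proof.
  intros Hlam HI H1 H2 H.
  assert (H2le : lam 2%nat <= 1) by (rewrite <- H1; apply lam_mono; auto; lia).
  set (eps := Rpower (lam 2%nat / 2) (1/2)).
  assert (He0 : 0 < eps) by apply Rpower_gt0.
  assert (He2 : eps ^ 2 = lam 2%nat / 2) by (apply sq_half; lra).
  assert (He1 : eps <= 1) by nra.
  exists (C * Rpower eps (- p)). intros d Hd.
  destruct (fam_lemma lam I d (b_of I d) 1 HI ltac:(lia) H1 ltac:(lra)) as [ls [Hn [Hl Hk]]].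
  rewrite Nat.pow_1_r in Hl. rewrite <- Hl. apply (H d eps Hd (conj He0 He1) ls Hn).
  intros k Hk'. destruct (Hk k Hk') as [Hk1 Hk2]. split; auto. rewrite He2. rewrite pow_1 in Hk2. lra.
Qed.

Lemma nec_log lam I C p q : admissible_eigs lam -> admissible_I I -> lam 1%nat = 1 -> lam 2%nat > 0 ->
  C > 0 -> p > 0 -> q >= 0 ->
  (forall d eps, (1 <= d)%nat -> 0 < eps <= 1 ->
     info_compl_le lam I eps d (C * Rpower eps (- p) * Rpower (INR d) q)) ->
  b_log I.
Proof.
  intros Hlam HI H1 H2 HC Hp Hq H.
  assert (H2le : lam 2%nat <= 1) by (rewrite <- H1; apply lam_mono; auto; lia).
  set (L2 := ln (lam 2%nat)).
  destruct (archi (exp (1 - p / 2 * L2))) as [K HK].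
  assert (HK0 : 0 < INR K) by (pose proof (exp_pos (1 - p / 2 * L2)); lra).
  assert (HK1 : (K <> 0)%nat) by (intros ->; simpl in HK0; lra).
  assert (HlnK : 1 - p / 2 * L2 <= ln (INR K)).
  { rewrite <- (ln_exp (1 - p / 2 * L2)). apply ln_le; [apply exp_pos|lra]. }
  set (A0 := ln C + p / 2 * ln 2).
  exists (INR K * (2 * (1 + Rabs A0) + q)). intros d Hd.
  set (b := b_of I d). set (j := (b / K)%nat).
  assert (Hjk : (j * K <= b)%nat) by (unfold j; rewrite Nat.mul_comm; apply Nat.Div0.mul_div_le).
  destruct (fam_lemma lam I d K j HI Hjk H1 ltac:(lra)) as [ls [Hn [Hl Hk]]].
  assert (Hpj : 0 < lam 2%nat ^ j) by (apply pow_lt; lra).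
  assert (Hpj1 : lam 2%nat ^ j <= 1) by (apply pow_le_one; lra).
  set (eps := Rpower (lam 2%nat ^ j / 2) (1/2)).
  assert (He0 : 0 < eps) by apply Rpower_gt0.
  assert (He2 : eps ^ 2 = lam 2%nat ^ j / 2) by (apply sq_half; lra).
  assert (He1 : eps <= 1) by nra.
  assert (Hc : INR (K ^ j) <= C * Rpower eps (- p) * Rpower (INR d) q).
  { rewrite <- Hl. apply (H d eps ltac:(lia) (conj He0 He1) ls Hn).
    intros k Hk'. destruct (Hk k Hk') as [Hk1 Hk2]. split; auto. rewrite He2. lra. }
  assert (Hd0 : 0 < INR d) by (apply lt_0_INR; lia).
  assert (HKj : 0 < INR (K ^ j)) by (rewrite pow_INR; apply pow_lt; auto).
  apply ln_le in Hc; auto.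
  rewrite pow_INR, ln_pow in Hc by auto.
  pose proof (Rpower_gt0 eps (- p)). pose proof (Rpower_gt0 (INR d) q).
  rewrite !ln_mult in Hc by (try apply Rmult_lt_0_compat; auto; lra).
  rewrite !ln_Rpower in Hc.
  assert (Hle : ln eps = 1/2 * (INR j * L2 - ln 2)).
  { unfold eps. rewrite ln_Rpower. replace (lam 2%nat ^ j / 2) with (lam 2%nat ^ j * / 2) by reflexivity.
    rewrite ln_mult by (try apply Rinv_0_lt_compat; lra).
    rewrite ln_Rinv by lra. unfold L2. rewrite ln_pow by lra. lra. }
  rewrite Hle in Hc.
  assert (Hj : INR j <= A0 + q * ln (INR d)).
  { assert (0 <= INR j) by apply pos_INR.
    assert (INR j <= INR j * (ln (INR K) + p / 2 * L2)) by nra.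
    unfold A0. nra. }
  assert (Hb : INR b <= INR K * (INR j + 1)).
  { rewrite <- S_INR, <- mult_INR. apply le_INR.
    pose proof (Nat.div_mod b K HK1). pose proof (Nat.mod_upper_bound b K HK1). unfold j. nia. }
  assert (Hln2 : 1 <= 2 * ln (INR d)).
  { assert (ln 2 <= ln (INR d)). { apply ln_le. lra. replace 2 with (INR 2) by (simpl; lra). apply le_INR; lia. }
    pose proof ln_lt_2. lra. }
  assert (Hlnd0 : 0 <= ln (INR d)) by lra.
  assert (INR j + 1 <= (2 * (1 + Rabs A0) + q) * ln (INR d)).
  { pose proof (Rle_abs A0). assert (0 <= Rabs A0) by apply Rabs_pos. nra. }
  fold b. apply Rle_trans with (INR K * (INR j + 1)); auto.
  rewrite Rmult_assoc. apply Rmult_le_compat_l; lra.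
Qed.

Theorem theorem2 (lam : nat -> R) (I : nat -> nat -> bool)
  (Hlam : admissible_eigs lam) (HI : admissible_I I)
  (H2 : lam 2%nat > 0) (H1 : lam 1%nat <= 1) :
  (strongly_poly_tractable lam I <->
     ((exists tau, tau > 0 /\ in_ell lam tau) /\
      (lam 1%nat < 1 \/ (lam 1%nat = 1 /\ lam 2%nat < 1 /\ b_bounded I))))
  /\
  (poly_tractable lam I <->
     ((exists tau, tau > 0 /\ in_ell lam tau) /\
      (lam 1%nat < 1 \/ (lam 1%nat = 1 /\ b_log I)))).
Proof.
  split; split.
  - intros HS. pose proof HS as [C [p [HC [Hp H]]]]. split.
    + exists p. split; auto. apply (nec_ell lam I C p); auto; intros eps He; apply H; auto.
    + destruct H1 as [Hlt|Heq]; [left; auto|right]. split; auto. split.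
      * assert (lam 2%nat <= 1) by (rewrite <- Heq; apply lam_mono; auto; lia).
        destruct H0 as [?|E]; auto. exfalso. apply (nec_lam2 lam I); auto.
      * apply (nec_bdd lam I C p); auto.
  - intros [Hell [Hlt|[Heq [H2lt Hb]]]].
    + apply suff_lt1; auto.
    + apply suff_eq1_bdd; auto.
  - intros [C [p [q [HC [Hp [Hq H]]]]]]. split.
    + exists p. split; auto. apply (nec_ell lam I C p); auto. intros eps He.
      eapply card_le_mono. apply H; auto. simpl INR. unfold Rpower at 2. rewrite ln_1, Rmult_0_r, exp_0. lra.
    + destruct H1 as [Hlt|Heq]; [left; auto|right]. split; auto.
      apply (nec_log lam I C p q); auto.
  - intros [Hell [Hlt|[Heq Hb]]].
    + apply SPT_PT, suff_lt1; auto.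
    + apply suff_eq1_log; auto.
Qed.
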